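(* Let $a\ge0$, $r>0$, $\beta\in\mathbb{R}$, $\theta\in(0,\frac\pi2)$ and $\lambda\in\overline{\Sigma_{\theta,r}}$. If either $\theta\in(\theta_0,\frac\pi2)$ with $\tan\theta_0\ge\frac{|\beta|}{\sqrt2}$, or ${\rm Re}\,\lambda>-\frac a2$, then $z_j(\lambda)\notin\mathbb{R}_-$ for $j=1,2$.
   Context: $\mathbb{R}_-=(-\infty,0)$. $\Sigma_{\theta,r}=\{z\in\mathbb{C}\setminus\{0\}:|\arg z|<\pi-\theta,|z|>r\}$, $\overline{\Sigma_{\theta,r}}$ its closure. $z_{1,2}(\lambda)$ are the two roots $z$ of $(\lambda-z)(\lambda+a-z)+\frac{\beta^2}{2}(z^2-az)=0$, i.e. $z_{1,2}=\frac{2\lambda+a(1+\beta^2/2)\pm\sqrt{a^2(1+\beta^2/2)^2-2\lambda^2\beta^2}}{2(1+\beta^2/2)}$. *)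

(* Defs.v *)
From Stdlib Require Import Reals.
From Coquelicot Require Import Coquelicot.
Open Scope R_scope.

Definition is_arg (z : C) (phi : R) : Prop :=
  - PI < phi <= PI /\ z = (Cmod z * cos phi, Cmod z * sin phi).

Definition Sigma (theta r : R) (z : C) : Prop :=
  z <> RtoC 0 /\
  (exists phi, is_arg z phi /\ Rabs phi < PI - theta) /\
  r < Cmod z.

Definition closureC (S : C -> Prop) (l : C) : Prop :=
  forall eps : R, 0 < eps -> exists w, S w /\ Cmod (Cminus w l) < eps.

Definition is_root_z (a beta : R) (lam z : C) : Prop :=
  Cplus (Cmult (Cminus lam z) (Cminus (Cplus lam (RtoC a)) z))
        (Cmult (RtoC (beta ^ 2 / 2)) (Cminus (Cmult z z) (Cmult (RtoC a) z)))
  = RtoC 0.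

Definition in_Rminus (z : C) : Prop := Im z = 0 /\ Re z < 0.

(* Main.v *)
Require Import Defs.
From Stdlib Require Import Reals Lra Psatz.
From Coquelicot Require Import Coquelicot.
Open Scope R_scope.

Lemma im_le_Cmod' (c : C) : Rabs (Im c) <= Cmod c.
Proof.
  pose proof (Cmod2_alt c). pose proof (Cmod_ge_0 c).
  destruct (Rle_dec (Rabs (Im c)) (Cmod c)) as [h|h]; auto.
  exfalso. pose proof (Rabs_pos (Im c)).
  assert (Rabs (Im c) ^ 2 = Im c ^ 2) by apply pow2_abs.
  nra.
Qed.

Lemma sigma_pos theta r w : 0 < r -> 0 < theta < PI/2 -> Sigma theta r w ->
  0 < Re w * sin theta + Rabs (Im w) * cos theta.
Proof.
  unfold Sigma, is_arg. intros Hr0 Ht [Hw0 [[phi [[Hp Hw] Habs]] Hr]].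
  assert (Hrho : 0 < Cmod w) by (pose proof (Cmod_ge_0 w); lra).
  set (rho := Cmod w) in *.
  rewrite Hw; simpl.
  destruct (Rle_dec 0 phi) as [h|h].
  - rewrite Rabs_pos_eq in Habs by lra.
    assert (0 <= sin phi) by (apply sin_ge_0; lra).
    rewrite Rabs_mult, (Rabs_pos_eq rho), (Rabs_pos_eq (sin phi)) by lra.
    assert (0 < sin (phi + theta)) by (apply sin_gt_0; lra).
    rewrite sin_plus in H0. nra.
  - rewrite Rabs_left in Habs by lra.
    assert (0 <= sin (-phi)) by (apply sin_ge_0; lra).
    rewrite sin_neg in H.
    rewrite Rabs_mult, (Rabs_pos_eq rho), (Rabs_left1 (sin phi)) by lra.
    assert (0 < sin (-phi + theta)) by (apply sin_gt_0; lra).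
    rewrite sin_plus, sin_neg, cos_neg in H0. nra.
Qed.

Lemma closure_nonneg theta r lam : 0 < r -> 0 < theta < PI/2 -> closureC (Sigma theta r) lam ->
  0 <= Re lam * sin theta + Rabs (Im lam) * cos theta.
Proof.
  intros Hr0 Ht Hc.
  destruct (Rle_dec 0 (Re lam * sin theta + Rabs (Im lam) * cos theta)) as [h|h]; auto.
  exfalso.
  set (d := - (Re lam * sin theta + Rabs (Im lam) * cos theta)).
  destruct (Hc (d/2)) as [w [Hw Hd]]. unfold d; lra.
  pose proof (sigma_pos theta r w Hr0 Ht Hw) as Hpos.
  pose proof (re_le_Cmod (Cminus w lam)) as Hre.
  pose proof (im_le_Cmod' (Cminus w lam)) as Him.
  pose proof (Cmod_ge_0 (Cminus w lam)) as Hc0.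
  set (m := Cmod (Cminus w lam)) in *.
  assert (0 < sin theta) by (apply sin_gt_0; lra).
  assert (0 < cos theta) by (apply cos_gt_0; lra).
  assert (sin theta <= 1) by apply SIN_bound.
  assert (cos theta <= 1) by apply COS_bound.
  destruct w as [w1 w2]; destruct lam as [p q]; simpl in *.
  assert (HA : w1 - p <= m) by (pose proof (Rle_abs (w1 + - p)); unfold Rminus; lra).
  assert (HB : Rabs w2 - Rabs q <= m).
  { pose proof (Rabs_triang_inv w2 q). unfold Rminus in *. lra. }
  assert (HA' : (w1 - p) * sin theta <= m) by nra.
  assert (HB' : (Rabs w2 - Rabs q) * cos theta <= m) by nra.
  unfold d in Hd. nra.
Qed.

Theorem lemma3p12 (a r beta theta : R) (lam : C) :
  0 <= a -> 0 < r -> 0 < theta < PI / 2 ->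
  closureC (Sigma theta r) lam ->
  ((exists theta0 : R, 0 <= theta0 < theta /\ Rabs beta / sqrt 2 <= tan theta0)
   \/ - a / 2 < Re lam) ->
  forall z : C, is_root_z a beta lam z -> ~ in_Rminus z.
Proof.
  intros Ha Hr Ht Hc Hcase z Hz [Hzi Hzr].
  pose proof (closure_nonneg theta r lam Hr Ht Hc) as Hf.
  assert (Hs : 0 < sin theta) by (apply sin_gt_0; lra).
  assert (Hco : 0 < cos theta) by (apply cos_gt_0; lra).
  destruct z as [x y]; destruct lam as [p q]; simpl in *; subst y.
  unfold is_root_z in Hz.
  set (k := beta ^ 2 / 2) in *.
  assert (Hk : 0 <= k) by (unfold k; nra).
  assert (E1 := f_equal fst Hz). assert (E2 := f_equal snd Hz).
  simpl in E1, E2. ring_simplify in E1. ring_simplify in E2.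
  assert (Hq : q * (2 * (p - x) + a) = 0) by lra.
  apply Rmult_integral in Hq. destruct Hq as [Hq|Hu].
  - subst q. rewrite Rabs_R0 in Hf.
    assert (p - x <= 0).
    { destruct (Rle_dec (p - x) 0) as [hh|hh]; auto. exfalso. assert (0 < (p-x)*(p-x+a)) by nra. assert (0 <= k*(x*x - x*a)) by (apply Rmult_le_pos; nra). nra. }
    nra.
  - assert (Hp : p = x - a/2) by lra. subst p.
    destruct Hcase as [[t0 [Ht0 Htan]] | Hre]; [| lra].
    assert (Htt : tan t0 < tan theta) by (apply tan_increasing; lra).
    unfold tan in Htt, Htan.
    assert (HB : 0 <= Rabs beta / sqrt 2) by (apply Rdiv_le_0_compat; [apply Rabs_pos| apply sqrt_lt_R0; lra]).
    set (B := Rabs beta / sqrt 2) in *.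
    assert (HB2 : B * B = k).
    { unfold B, k. assert (sqrt 2 * sqrt 2 = 2) by (apply sqrt_sqrt; lra).
      assert (0 < sqrt 2) by (apply sqrt_lt_R0; lra).
      assert (Rabs beta * Rabs beta = beta ^ 2) by (rewrite <- Rabs_mult; rewrite Rabs_right; [ring | nra]).
      unfold Rdiv. rewrite <- H1.
      replace (Rabs beta * / sqrt 2 * (Rabs beta * / sqrt 2)) with (Rabs beta * Rabs beta * / (sqrt 2 * sqrt 2)) by (field; lra).
      rewrite H. reflexivity. }
    assert (Hsin : sin theta > B * cos theta).
    { assert (B < sin theta / cos theta) by lra.
      apply (Rmult_lt_compat_r (cos theta)) in H; auto.
      unfold Rdiv in H. rewrite Rmult_assoc, Rinv_l in H; lra. }
    assert (Hq2 : q * q <= k * ((x - a/2) * (x - a/2))) by nra.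
    assert (Rabs q * Rabs q = q * q) by (rewrite <- Rabs_mult; rewrite Rabs_right; [ring|nra]).
    pose proof (Rabs_pos q).
    assert (Rabs q * cos theta >= (a/2 - x) * sin theta) by lra.
    assert (Rabs q * cos theta > (a/2 - x) * B * cos theta) by nra.
    assert (Hg : Rabs q > (a/2 - x) * B) by nra.
    assert (Hg0 : 0 <= (a/2 - x) * B) by nra.
    assert (Rabs q * Rabs q > ((a/2 - x) * B) * ((a/2 - x) * B)) by nra.
    assert (((a/2 - x) * B) * ((a/2 - x) * B) = k * ((x - a/2) * (x - a/2))) by (rewrite <- HB2; ring).
    lra.
Qed.
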